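(* Suppose $K\in\mathbb{K}$ and $K'=K-2\eta L^K$ (i.e. $K_i'=K_i-2\eta L_i^K$ for each $i$). If $$0<\eta\le\frac{1}{2\|R+B^T\mathcal{E}(P^K)B\|_{\max}},$$ then $K'\in\mathbb{K}$.
   Context: Let $N_s\ge 1$, $\Omega=\{1,\dots,N_s\}$; tuples $V=(V_1,\dots,V_{N_s})$ of matrices are combined componentwise (so $(R+B^T\mathcal{E}(P^K)B)_i=R_i+B_i^T\mathcal{E}_i(P^K)B_i$), $\|V\|_{\max}=\max_i\|V_i\|$ (spectral norm). Markovian jump linear system: $x_{t+1}=A_{\omega(t)}x_t+B_{\omega(t)}u_t$, $A_i\in\mathbb{R}^{d\times d}$, $B_i\in\mathbb{R}^{d\times k}$; $\{\omega(t)\}$ is a time-homogeneous Markov chain on $\Omega$ with transition probabilities $p_{ij}$ and initial distribution $\pi$ with $\pi_i>0$; $x_0$ is random, independent of the chain, with $\mathbb{E}[x_0x_0^T]\succ0$. The system is mean-square stabilizable. $Q=(Q_i)\succ0$, $R=(R_i)\succ0$. For $K=(K_i)$, $K_i\in\mathbb{R}^{k\times d}$, $u_t=-K_{\omega(t)}x_t$. $\mathbb{K}$ is the set of $K$ making the closed loop $x_{t+1}=(A_{\omega(t)}-B_{\omega(t)}K_{\omega(t)})x_t$ mean-square stable ($\mathbb{E}[x_tx_t^T]\to0$ for all initial conditions). $\mathcal{E}_i(V)=\sum_jp_{ij}V_j$. For $K\in\mathbb{K}$, $P^K$ is the unique solution of $P_i^K=Q_i+K_i^TR_iK_i+(A_i-B_iK_i)^T\mathcal{E}_i(P^K)(A_i-B_iK_i)$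 and $L_i^K=(R_i+B_i^T\mathcal{E}_i(P^K)B_i)K_i-B_i^T\mathcal{E}_i(P^K)A_i$. *)

(* Defs.v *)
From HB Require Import structures.
From mathcomp Require Import all_boot all_order all_algebra.
From mathcomp Require Import boolp classical_sets reals topology normedtype sequences.
Set Implicit Arguments. Unset Strict Implicit. Unset Printing Implicit Defensive.
Import Order.TTheory GRing.Theory Num.Theory numFieldNormedType.Exports.
Local Open Scope ring_scope.
Local Open Scope classical_set_scope.

Section Defs.
Variable R : realType.

Definition vnorm2 n (v : 'cV[R]_n) : R := Num.sqrt (\sum_(i < n) v i 0 ^+ 2).

Definition spec_norm m n (M : 'M[R]_(m, n)) : R :=
  sup [set vnorm2 (M *m v) | v in [set v : 'cV[R]_n | vnorm2 v <= 1]].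

Definition max_norm Ns m n (V : 'I_Ns -> 'M[R]_(m, n)) : R :=
  \big[Num.max/0]_(i < Ns) spec_norm (V i).

Definition symm n (M : 'M[R]_n) := M^T = M.
Definition psd n (M : 'M[R]_n) :=
  symm M /\ forall v : 'cV[R]_n, 0 <= (v^T *m M *m v) 0 0.
Definition posdef n (M : 'M[R]_n) :=
  symm M /\ forall v : 'cV[R]_n, v != 0 -> 0 < (v^T *m M *m v) 0 0.

Definition Eop Ns n (p : 'I_Ns -> 'I_Ns -> R) (V : 'I_Ns -> 'M[R]_n) (i : 'I_Ns)
  : 'M[R]_n := \sum_(j < Ns) p i j *: V j.

Definition stochastic Ns (p : 'I_Ns -> 'I_Ns -> R) :=
  (forall i j, 0 <= p i j) /\ (forall i, \sum_(j < Ns) p i j = 1).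
Definition init_distr Ns (pi : 'I_Ns -> R) :=
  (forall i, 0 < pi i) /\ \sum_(i < Ns) pi i = 1.

Definition Acl Ns d k (A : 'I_Ns -> 'M[R]_d) (B : 'I_Ns -> 'M[R]_(d, k))
  (K : 'I_Ns -> 'M[R]_(k, d)) (i : 'I_Ns) : 'M[R]_d := A i - B i *m K i.

Definition path_prob Ns (p : 'I_Ns -> 'I_Ns -> R) (pi : 'I_Ns -> R) t
  (w : {ffun 'I_t.+1 -> 'I_Ns}) : R :=
  pi (w ord0) * \prod_(s < t) p (w (inord s)) (w (inord s.+1)).

(* state-transition matrix M_{w(t-1)} ... M_{w(0)} along the path *)
Definition path_trans Ns d (M : 'I_Ns -> 'M[R]_d) t
  (w : {ffun 'I_t.+1 -> 'I_Ns}) : 'M[R]_d :=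
  foldl (fun acc s => M (w (inord s)) *m acc) 1%:M (iota 0 t).

(* E[x_t x_t^T] for x_{t+1} = M_{w(t)} x_t, with E[x_0 x_0^T] = X0 and x_0
   independent of the chain: expectation written over the finite path space *)
Definition second_moment Ns d (p : 'I_Ns -> 'I_Ns -> R) (pi : 'I_Ns -> R)
  (M : 'I_Ns -> 'M[R]_d) (X0 : 'M[R]_d) (t : nat) : 'M[R]_d :=
  \sum_(w : {ffun 'I_t.+1 -> 'I_Ns})
     path_prob p pi w *: (path_trans M w *m X0 *m (path_trans M w)^T).

(* K is in the set \mathbb{K}: closed loop is mean-square stable *)
Definition ms_stabilizing Ns d k (p : 'I_Ns -> 'I_Ns -> R) (pi : 'I_Ns -> R)
  (A : 'I_Ns -> 'M[R]_d) (B : 'I_Ns -> 'M[R]_(d, k)) (K : 'I_Ns -> 'M[R]_(k, d)) :=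
  forall X0 : 'M[R]_d, psd X0 ->
    forall a b : 'I_d,
      (fun t => second_moment p pi (Acl A B K) X0 t a b) @ \oo --> 0.

Definition is_PK Ns d k (p : 'I_Ns -> 'I_Ns -> R)
  (A : 'I_Ns -> 'M[R]_d) (B : 'I_Ns -> 'M[R]_(d, k)) (Q : 'I_Ns -> 'M[R]_d)
  (Rc : 'I_Ns -> 'M[R]_k) (K : 'I_Ns -> 'M[R]_(k, d)) (P : 'I_Ns -> 'M[R]_d) :=
  forall i, P i = Q i + (K i)^T *m Rc i *m K i
                  + (Acl A B K i)^T *m Eop p P i *m Acl A B K i.

Definition LK Ns d k (p : 'I_Ns -> 'I_Ns -> R)
  (A : 'I_Ns -> 'M[R]_d) (B : 'I_Ns -> 'M[R]_(d, k))
  (Rc : 'I_Ns -> 'M[R]_k) (K : 'I_Ns -> 'M[R]_(k, d)) (P : 'I_Ns -> 'M[R]_d)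
  (i : 'I_Ns) : 'M[R]_(k, d) :=
  (Rc i + (B i)^T *m Eop p P i *m B i) *m K i - (B i)^T *m Eop p P i *m A i.

End Defs.

(* Main.v *)
Require Import Defs.
From mathcomp Require Import all_boot all_order all_algebra.
From mathcomp Require Import boolp classical_sets reals topology normedtype sequences.
From mathcomp Require Import ring lra.
Import Order.TTheory GRing.Theory Num.Theory numFieldNormedType.Exports.
Set Implicit Arguments. Unset Strict Implicit. Unset Printing Implicit Defensive.
Local Open Scope ring_scope.
Local Open Scope classical_set_scope.

Section BF.
Variable T : realType.

Definition bf n (G : 'M[T]_n) (x y : 'cV[T]_n) : T := (x^T *m G *m y) 0 0.
Definition nsq n (x : 'cV[T]_n) : T := \sum_(a < n) x a 0 ^+ 2.
Definition cst n m (G : 'M[T]_(n, m)) : T := \sum_(a < n) \sum_(b < m) `|G a b|.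

Lemma bfE n (G : 'M[T]_n) x y :
  bf G x y = \sum_(a < n) \sum_(b < n) x a 0 * G a b * y b 0.
Proof.
rewrite /bf mxE; under eq_bigr do rewrite mxE mulr_suml.
rewrite exchange_big /=; apply: eq_bigr => a _; apply: eq_bigr => b _.
by rewrite mxE.
Qed.

Lemma nsq_ge0 n (x : 'cV[T]_n) : 0 <= nsq x.
Proof. by apply: sumr_ge0 => a _; rewrite sqr_ge0. Qed.

Lemma cst_ge0 n m (G : 'M[T]_(n, m)) : 0 <= cst G.
Proof. by apply: sumr_ge0 => a _; apply: sumr_ge0 => b _. Qed.

Lemma sq_le_nsq n (x : 'cV[T]_n) a : x a 0 ^+ 2 <= nsq x.
Proof.
rewrite /nsq (bigD1 a) //= lerDl; apply: sumr_ge0 => b _; exact: sqr_ge0.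
Qed.

Lemma bf1 n (x : 'cV[T]_n) : bf 1%:M x x = nsq x.
Proof.
rewrite /bf mulmx1 mxE; apply: eq_bigr => a _; by rewrite mxE expr2.
Qed.

Lemma bf_mul n m (G : 'M[T]_n) (M : 'M[T]_(n, m)) x y :
  bf G (M *m x) (M *m y) = bf (M^T *m G *m M) x y.
Proof. by rewrite /bf trmx_mul !mulmxA. Qed.

Lemma bf_tr n (G : 'M[T]_n) x y : bf G x y = bf G^T y x.
Proof.
rewrite /bf; transitivity ((x^T *m G *m y)^T 0 0); first by rewrite [RHS]mxE.
by rewrite !trmx_mul trmxK mulmxA.
Qed.

Lemma bfGD n (G H : 'M[T]_n) x y : bf (G + H) x y = bf G x y + bf H x y.
Proof. by rewrite /bf mulmxDr mulmxDl mxE. Qed.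

Lemma bfGN n (G : 'M[T]_n) x y : bf (- G) x y = - bf G x y.
Proof. by rewrite /bf mulmxN mulNmx mxE. Qed.

Lemma bfGB n (G H : 'M[T]_n) x y : bf (G - H) x y = bf G x y - bf H x y.
Proof. by rewrite bfGD bfGN. Qed.

Lemma bfGZ n (c : T) (G : 'M[T]_n) x y : bf (c *: G) x y = c * bf G x y.
Proof. by rewrite /bf -scalemxAr -scalemxAl mxE. Qed.

Lemma bfGsum n (I : finType) (G : I -> 'M[T]_n) x y :
  bf (\sum_i G i) x y = \sum_i bf (G i) x y.
Proof.
rewrite /bf mulmx_sumr mulmx_suml summxE; apply: eq_bigr => i _ //.
Qed.

Lemma bfDl n (G : 'M[T]_n) x1 x2 y : bf G (x1 + x2) y = bf G x1 y + bf G x2 y.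
Proof. by rewrite /bf linearD /= !mulmxDl mxE. Qed.

Lemma bfDr n (G : 'M[T]_n) x y1 y2 : bf G x (y1 + y2) = bf G x y1 + bf G x y2.
Proof. by rewrite /bf mulmxDr mxE. Qed.

Lemma bfZl n (G : 'M[T]_n) c x y : bf G (c *: x) y = c * bf G x y.
Proof. by rewrite /bf linearZ /= -!scalemxAl mxE. Qed.

Lemma bfZr n (G : 'M[T]_n) c x y : bf G x (c *: y) = c * bf G x y.
Proof. by rewrite /bf -scalemxAr mxE. Qed.

Lemma bfNl n (G : 'M[T]_n) x y : bf G (- x) y = - bf G x y.
Proof. by rewrite -scaleN1r bfZl mulN1r. Qed.

Lemma bfNr n (G : 'M[T]_n) x y : bf G x (- y) = - bf G x y.
Proof. by rewrite -scaleN1r bfZr mulN1r. Qed.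

Lemma abs_prod3 (u g v : T) : `|u * g * v| <= `|g| * (u ^+ 2 + v ^+ 2).
Proof.
rewrite !normrM -[u ^+ 2]real_normK ?num_real // -[v ^+ 2]real_normK ?num_real //.
have h1 := normr_ge0 u; have h2 := normr_ge0 v; have h3 := normr_ge0 g.
have h : `|u| * `|v| <= `|u| ^+ 2 + `|v| ^+ 2 by nra.
by rewrite mulrAC mulrC; apply: ler_wpM2l.
Qed.

Lemma bf_abs n (G : 'M[T]_n) x y : `|bf G x y| <= cst G * (nsq x + nsq y).
Proof.
rewrite bfE /cst mulr_suml.
apply: (le_trans (ler_norm_sum _ _ _)); apply: ler_sum => a _.
rewrite mulr_suml.
apply: (le_trans (ler_norm_sum _ _ _)); apply: ler_sum => b _.
apply: (le_trans (abs_prod3 _ _ _)); apply: ler_wpM2l => //.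
by apply: lerD; apply: sq_le_nsq.
Qed.

End BF.

Section Paths.
Variable T : realType.
Variables (Ns d : nat) (p : 'I_Ns -> 'I_Ns -> T).

Definition Fb (rho : 'I_Ns -> T) (M G : 'I_Ns -> 'M[T]_d) (x y : 'cV[T]_d) t :=
  \sum_(w : {ffun 'I_t.+1 -> 'I_Ns}) path_prob p rho w *
     bf (G (w ord_max)) (path_trans M w *m x) (path_trans M w *m y).

Definition extw t (w : {ffun 'I_t.+1 -> 'I_Ns}) (j : 'I_Ns) : {ffun 'I_t.+2 -> 'I_Ns} :=
  [ffun i : 'I_t.+2 => if (i : nat) == t.+1 then j else w (inord i)].

Lemma extw_lt t (w : {ffun 'I_t.+1 -> 'I_Ns}) j (s : nat) : (s < t.+1)%N -> extw w j (inord s) = w (inord s).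
Proof.
move=> hs; rewrite ffunE inordK; last by apply: (ltn_trans hs).
by rewrite (ltn_eqF hs).
Qed.

Lemma extw_last t (w : {ffun 'I_t.+1 -> 'I_Ns}) j : @extw t w j (inord t.+1) = j.
Proof. by rewrite ffunE inordK // eqxx. Qed.

Lemma extw_max t (w : {ffun 'I_t.+1 -> 'I_Ns}) j : @extw t w j ord_max = j.
Proof. by rewrite ffunE eqxx. Qed.

Lemma sum_ext t (F : {ffun 'I_t.+2 -> 'I_Ns} -> T) :
  \sum_w F w = \sum_(w : {ffun 'I_t.+1 -> 'I_Ns}) \sum_j F (extw w j).
Proof.
rewrite pair_bigA /= (reindex (fun u => extw u.1 u.2)) //=.
apply: onW_bij.
exists (fun w' : {ffun 'I_t.+2 -> 'I_Ns} => ([ffun i : 'I_t.+1 => w' (inord i)], w' ord_max)).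
- case=> w j /=; rewrite extw_max; congr pair; apply/ffunP => i.
  by rewrite ffunE extw_lt // inord_val.
- move=> w'; apply/ffunP => i; rewrite ffunE; case: eqP => h.
  + by congr (w' _); apply: val_inj; rewrite /= h.
  + have hi : (i < t.+1)%N by have := ltn_ord i; rewrite ltnS leq_eqVlt => /orP[/eqP|].
    by rewrite ffunE inordK // inord_val.
Qed.

Lemma path_prob_ge0 rho t (w : {ffun 'I_t.+1 -> 'I_Ns}) :
  (forall i, 0 <= rho i) -> (forall i j, 0 <= p i j) -> 0 <= path_prob p rho w.
Proof.
move=> hr hp; rewrite /path_prob mulr_ge0 //; exact: prodr_ge0.
Qed.

Lemma path_prob_le rho rho' t (w : {ffun 'I_t.+1 -> 'I_Ns}) :
  (forall i, rho i <= rho' i) -> (forall i j, 0 <= p i j) ->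
  path_prob p rho w <= path_prob p rho' w.
Proof.
move=> hr hp; rewrite /path_prob ler_wpM2r //; exact: prodr_ge0.
Qed.

Lemma path_prob_ext rho t (w : {ffun 'I_t.+1 -> 'I_Ns}) j :
  path_prob p rho (@extw t w j) = path_prob p rho w * p (w ord_max) j.
Proof.
rewrite /path_prob big_ord_recr /= -[RHS]mulrA; congr (_ * _).
  rewrite (_ : ord0 = inord 0); last by apply: val_inj; rewrite /= inordK.
  rewrite extw_lt //; congr (rho (w _)); by apply: val_inj; rewrite /= inordK.
congr (_ * _).
  apply: eq_bigr => s _.
  have h2 : (s.+1 < t.+1)%N by rewrite ltnS.
  have h1 : (s < t.+1)%N by apply: ltn_trans h2.
  by rewrite !extw_lt.
rewrite extw_last extw_lt //; congr (p (w _) j); by apply: val_inj; rewrite /= inordK.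
Qed.

Lemma foldl_eq_in (F G : nat -> 'M[T]_d) l acc :
  (forall s, s \in l -> F s = G s) ->
  foldl (fun (a : 'M[T]_d) s => F s *m a) acc l = foldl (fun (a : 'M[T]_d) s => G s *m a) acc l.
Proof.
elim: l acc => //= s l IH acc H; rewrite H ?mem_head // IH // => s' hs'.
by apply: H; rewrite in_cons hs' orbT.
Qed.

Lemma path_trans_ext (M : 'I_Ns -> 'M[T]_d) t (w : {ffun 'I_t.+1 -> 'I_Ns}) j :
  path_trans M (@extw t w j) = M (w ord_max) *m path_trans M w.
Proof.
rewrite /path_trans (_ : iota 0 t.+1 = iota 0 t ++ [:: t]); last by rewrite -addn1 iotaD.
rewrite foldl_cat /=.
rewrite (@foldl_eq_in _ (fun s => M (w (inord s)))).
  rewrite extw_lt //; congr (M (w _) *m _); by apply: val_inj; rewrite /= inordK.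
by move=> s; rewrite mem_iota add0n => /andP[_ hs]; rewrite extw_lt // ltnS ltnW.
Qed.

Lemma Fb0 rho M G x y :
  Fb rho M G x y 0 = \sum_j rho j * bf (G j) x y.
Proof.
rewrite /Fb (reindex (fun j : 'I_Ns => [ffun _ : 'I_1 => j])) /=.
  apply: eq_bigr => j _; rewrite /path_prob /path_trans /= big_ord0 mulr1 !ffunE.
  by rewrite !mul1mx.
exists (fun w : {ffun 'I_1 -> 'I_Ns} => w ord0).
  by move=> j _; rewrite ffunE.
by move=> w _; apply/ffunP => i; rewrite ffunE (ord1 i).
Qed.

Lemma Fb_step rho M G H x y t :
  (forall i, H i = (M i)^T *m Eop p G i *m M i) ->
  Fb rho M G x y t.+1 = Fb rho M H x y t.
Proof.
move=> hH; rewrite /Fb sum_ext; apply: eq_bigr => w _.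
under eq_bigr do rewrite path_prob_ext extw_max path_trans_ext -!mulmxA bf_mul -mulrA.
rewrite -mulr_sumr; congr (_ * _).
rewrite hH /Eop -[in RHS]bf_mul bfGsum; apply: eq_bigr => j _.
by rewrite bfGZ [in RHS]bf_mul.
Qed.

Lemma Fb_le rho M G H x t :
  (forall i, 0 <= rho i) -> (forall i j, 0 <= p i j) ->
  (forall i u, bf (G i) u u <= bf (H i) u u) ->
  Fb rho M G x x t <= Fb rho M H x x t.
Proof.
move=> hr hp hGH; apply: ler_sum => w _; apply: ler_wpM2l => //.
exact: path_prob_ge0.
Qed.

Lemma Fb_ge0 rho M G x t :
  (forall i, 0 <= rho i) -> (forall i j, 0 <= p i j) ->
  (forall i u, 0 <= bf (G i) u u) -> 0 <= Fb rho M G x x t.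
Proof.
move=> hr hp hG; apply: sumr_ge0 => w _; apply: mulr_ge0 => //.
exact: path_prob_ge0.
Qed.

Lemma Fb_rho_le rho rho' M G x t :
  (forall i, 0 <= rho i) -> (forall i, rho i <= rho' i) -> (forall i j, 0 <= p i j) ->
  (forall i u, 0 <= bf (G i) u u) -> Fb rho M G x x t <= Fb rho' M G x x t.
Proof.
move=> hr hr' hp hG; apply: ler_sum => w _; apply: ler_wpM2r => //.
exact: path_prob_le.
Qed.

Lemma Fb_add rho M G H x y t :
  Fb rho M (fun i => G i + H i) x y t = Fb rho M G x y t + Fb rho M H x y t.
Proof. by rewrite /Fb -big_split; apply: eq_bigr => w _; rewrite bfGD mulrDr. Qed.

Definition FI rho M x t := Fb rho M (fun _ => 1%:M) x x t.

Lemma Fb_abs rho M G x y t :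
  (forall i, 0 <= rho i) -> (forall i j, 0 <= p i j) ->
  `|Fb rho M G x y t| <= (\sum_i cst (G i)) * (FI rho M x t + FI rho M y t).
Proof.
move=> hr hp; rewrite /FI /Fb -big_split mulr_sumr.
apply: (le_trans (ler_norm_sum _ _ _)); apply: ler_sum => w _.
have h0 := path_prob_ge0 w hr hp.
rewrite /= normrM ger0_norm // !bf1 -mulrDr mulrCA; apply: ler_wpM2l => //.
apply: (le_trans (bf_abs _ _ _)); apply: ler_wpM2r.
  by apply: addr_ge0; apply: nsq_ge0.
rewrite (bigD1 (w ord_max)) //= lerDl; apply: sumr_ge0 => i _; exact: cst_ge0.
Qed.

End Paths.

Section Cvg.
Variable T : realType.

Lemma cvg_sum0 (I : Type) (r : seq I) (f : I -> nat -> T) :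
  (forall i, f i @ \oo --> 0) -> (fun t => \sum_(i <- r) f i t) @ \oo --> 0.
Proof.
move=> hf; elim: r => [|i r IH].
  under eq_fun do rewrite big_nil. exact: cvg_cst.
under eq_fun do rewrite big_cons.
have h := cvgD (hf i) IH. rewrite addr0 in h. apply: h.
Qed.

Lemma squeeze_abs (u v : nat -> T) :
  (forall t, `|u t| <= v t) -> v @ \oo --> 0 -> u @ \oo --> 0.
Proof.
move=> huv hv.
apply: (@squeeze_cvgr _ _ _ _ (fun t => - v t) v) => //.
  apply: nearW => t; have := huv t; rewrite ler_norml => /andP[h1 h2].
  by rewrite h1 h2.
rewrite -oppr0; exact: cvgN.
Qed.

Lemma squeeze0 (u v : nat -> T) :
  (forall t, 0 <= u t <= v t) -> v @ \oo --> 0 -> u @ \oo --> 0.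
Proof.
move=> huv; apply: squeeze_abs => t; have /andP[h1 h2] := huv t.
by rewrite ger0_norm.
Qed.

Lemma le0_of_cvg (a : T) (v : nat -> T) :
  (forall t, a <= v t) -> v @ \oo --> 0 -> a <= 0.
Proof.
move=> hav hv.
have <- : lim (v @ \oo) = 0 by apply: cvg_lim.
apply: limr_ge; first by apply/cvg_ex; exists 0.
exact: nearW.
Qed.

Lemma series_cvg0 (W : nat -> T) (C : T) :
  (forall t, 0 <= W t) -> (forall n, \sum_(0 <= t < n) W t <= C) ->
  W @ \oo --> 0.
Proof.
move=> h0 hC; apply: cvg_series_cvg_0.
apply: nondecreasing_is_cvgn.
  by apply: nondecreasing_series => n _ _; apply: h0.
exists C => _ [n _ <-]; exact: hC.
Qed.

End Cvg.

Section Mx.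
Variable T : realType.

Lemma bf_delta n (G : 'M[T]_n) a b : bf G (delta_mx a 0) (delta_mx b 0) = G a b.
Proof. by rewrite /bf trmx_delta -rowE -colE !mxE. Qed.

Lemma bf_ext n (G H : 'M[T]_n) : (forall u v, bf G u v = bf H u v) -> G = H.
Proof. by move=> h; apply/matrixP => a b; rewrite -!bf_delta h. Qed.

Lemma bf_sym n (G : 'M[T]_n) u v : G^T = G -> bf G u v = bf G v u.
Proof. by move=> h; rewrite bf_tr h. Qed.

Lemma posdef_psd n (G : 'M[T]_n) : posdef G -> forall u, 0 <= bf G u u.
Proof.
move=> [_ hG] u; case: (eqVneq u 0) => [->|hu].
  by rewrite /bf mulmx0 mxE.
exact/ltW/hG.
Qed.

Definition pdc n (G : 'M[T]_n) := 2 * cst (invmx G)^T + 1.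

Lemma pdc_ge0 n (G : 'M[T]_n) : 0 <= pdc G.
Proof. by rewrite /pdc addr_ge0 // mulr_ge0 // cst_ge0. Qed.

Lemma posdef_unit n (G : 'M[T]_n) : posdef G -> G \in unitmx.
Proof.
move=> [hs hG]; rewrite -row_free_unit -kermx_eq0; apply/eqP.
apply/row_matrixP => i; rewrite row0.
set r := row i (kermx G).
have hr : r *m G = 0 by rewrite /r -row_mul mulmx_ker row0.
apply/eqP; apply: contraT => hne.
have hv : r^T != 0 by apply: contra hne => /eqP h; rewrite -[r]trmxK h linear0.
have := hG _ hv; rewrite trmxK hr mul0mx mxE ltxx //.
Qed.

Lemma posdef_lb n (G : 'M[T]_n) : posdef G -> forall u, nsq u <= pdc G * bf G u u.
Proof.
move=> hG u; have hU := posdef_unit hG; have [hs _] := hG.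
set Y := invmx G; set y := Y *m u.
have hGy : G *m y = u by rewrite /y mulKVmx.
set s := pdc G; set c2 := 2 * cst Y^T.
have hs0 : 0 < s by rewrite /s /pdc ltr_pwDr // mulr_ge0 // cst_ge0.
have hc2 : 0 <= c2 by rewrite mulr_ge0 // cst_ge0.
have hpsd := posdef_psd hG (s *: u - y).
rewrite bfDl !bfDr !bfZl !bfZr !bfNl !bfNr in hpsd.
have e1 : bf G u y = nsq u by rewrite -bf1 /bf -mulmxA hGy mulmx1.
have e2 : bf G y u = nsq u by rewrite bf_sym.
have e3 : bf G y y <= c2 * nsq u.
  rewrite /y bf_mul (_ : Y^T *m G *m Y = Y^T); last by rewrite -mulmxA mulmxV // mulmx1.
  have h1 := bf_abs Y^T u u; have h2 := ler_norm (bf Y^T u u).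
  rewrite /c2; lra.
have hn := nsq_ge0 u.
have hq := posdef_psd hG u.
rewrite e1 e2 in hpsd.
have hsc : s = c2 + 1 by [].
nra.
Qed.


Lemma nsqZ n (c : T) (v : 'cV[T]_n) : nsq (c *: v) = c ^+ 2 * nsq v.
Proof. by rewrite /nsq mulr_sumr; apply: eq_bigr => a _; rewrite mxE exprMn. Qed.

Lemma nsq_eq0 n (v : 'cV[T]_n) : nsq v = 0 -> v = 0.
Proof.
move=> h; apply/matrixP => a b; rewrite (ord1 b) mxE.
have := psumr_eq0P (fun i _ => sqr_ge0 (v i 0)) h (i := a) isT.
by move/eqP; rewrite sqrf_eq0 => /eqP.
Qed.

Lemma bf_amgm n (z y : 'cV[T]_n) (lam : T) : 0 < lam ->
  2 * (z^T *m y) 0 0 <= lam * nsq z + nsq y / lam.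
Proof.
move=> hl; rewrite mxE /nsq mulr_sumr mulr_suml mulr_sumr -big_split /=.
apply: ler_sum => a _; rewrite mxE.
set x := z a 0; set w := y a 0.
have h : 0 <= (lam * x - w) ^+ 2 / lam by rewrite divr_ge0 // ?sqr_ge0 ?ltW.
have e : (lam * x - w) ^+ 2 / lam = lam * x ^+ 2 + w ^+ 2 / lam - 2 * (x * w).
  by field; rewrite gt_eqF.
lra.
Qed.

Lemma spec_ub n (W : 'M[T]_n) :
  has_ubound [set vnorm2 (W *m v) | v in [set v : 'cV[T]_n | vnorm2 v <= 1]].
Proof.
exists (1 + cst (W^T *m 1%:M *m W) * 2) => _ [v hv <-].
rewrite /vnorm2.
have hn : nsq v <= 1.
  have h0 := nsq_ge0 v.
  rewrite -(sqr_sqrtr h0); have := sqrtr_ge0 (nsq v); move: hv; rewrite /vnorm2 -/(nsq v).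
  move=> hv h1; have hv' : Num.sqrt (nsq v) <= 1 := hv; nra.
have hw : nsq (W *m v) <= cst (W^T *m 1%:M *m W) * 2.
  rewrite -bf1 bf_mul; apply: le_trans (ler_norm _) _.
  apply: le_trans (bf_abs _ _ _) _; apply: ler_wpM2l; first exact: cst_ge0.
  lra.
set s := Num.sqrt _.
have hs2 : s ^+ 2 = nsq (W *m v) by rewrite sqr_sqrtr // nsq_ge0.
have : s <= 1 + s ^+ 2 by nra.
rewrite -/(nsq (W *m v)) in hs2 *. lra.
Qed.

Lemma bf_le_spec n (W : 'M[T]_n) (z : 'cV[T]_n) (lam : T) :
  0 < lam -> spec_norm W <= lam -> bf W z z <= lam * nsq z.
Proof.
move=> hl hW.
have key : forall v : 'cV[T]_n, vnorm2 v <= 1 -> vnorm2 (W *m v) <= lam.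
  move=> v hv; apply: le_trans hW; apply: ub_le_sup; first exact: spec_ub.
  by exists v.
have hz := nsq_ge0 z.
case: (eqVneq (nsq z) 0) => [/nsq_eq0 ->|hnz].
  by rewrite /bf mulmx0 mxE /nsq big1 ?mulr0 // => a _; rewrite mxE expr0n.
set r := Num.sqrt (nsq z).
have hr : 0 < r by rewrite sqrtr_gt0 lt_def hnz hz.
have hr2 : r ^+ 2 = nsq z by rewrite sqr_sqrtr.
have hWz : nsq (W *m z) <= lam ^+ 2 * nsq z.
  have := key (r^-1 *: z).
  rewrite /vnorm2 -/(nsq (r^-1 *: z)) -/(nsq (W *m (r^-1 *: z))) nsqZ -scalemxAr nsqZ.
  rewrite -hr2 exprVn mulVf ?sqrtr1 ?lexx ?expf_neq0 ?gt_eqF // => /(_ isT) h.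
  have h0 := sqrtr_ge0 (r ^- 2 * nsq (W *m z)).
  have : r ^- 2 * nsq (W *m z) <= lam ^+ 2.
    rewrite -[X in X <= _](@sqr_sqrtr _ (r ^- 2 * nsq (W *m z))); last first.
      by rewrite mulr_ge0 ?nsq_ge0 // invr_ge0 exprn_ge0 // ltW.
    nra.
  move=> h1.
  have e' : nsq (W *m z) = (r ^- 2 * nsq (W *m z)) * r ^+ 2.
    by rewrite mulrAC mulVf ?mul1r // expf_neq0 // gt_eqF.
  rewrite [X in X <= _]e'; apply: ler_wpM2r => //; exact: exprn_ge0 (ltW hr).
have := bf_amgm z (W *m z) hl.
have e : (z^T *m (W *m z)) 0 0 = bf W z z by rewrite /bf mulmxA.
rewrite e.
have : nsq (W *m z) / lam <= lam * nsq z.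
  rewrite ler_pdivrMr //. nra.
lra.
Qed.

End Mx.

Section Main.
Variable T : realType.
Variables (Ns d k : nat) (A : 'I_Ns -> 'M[T]_d) (B : 'I_Ns -> 'M[T]_(d, k))
  (p : 'I_Ns -> 'I_Ns -> T) (pi : 'I_Ns -> T)
  (Q : 'I_Ns -> 'M[T]_d) (Rc : 'I_Ns -> 'M[T]_k).
Hypotheses (Hp : stochastic p) (Hpi : init_distr pi)
  (HQ : forall i, posdef (Q i)) (HR : forall i, posdef (Rc i)).
Variables (K : 'I_Ns -> 'M[T]_(k, d)) (P : 'I_Ns -> 'M[T]_d).
Hypotheses (HK : ms_stabilizing p pi A B K) (HP : is_PK p A B Q Rc K P).

Let hp0 : forall i j, 0 <= p i j. Proof. by case: Hp. Qed.
Let hpi0 : forall i, 0 <= pi i. Proof. by case: Hpi => h _ i; apply: ltW. Qed.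

Local Notation MK := (Acl A B K).

Lemma bf_Eop n (G : 'I_Ns -> 'M[T]_n) i x y :
  bf (Eop p G i) x y = \sum_j p i j * bf (G j) x y.
Proof. by rewrite /Eop bfGsum; apply: eq_bigr => j _; rewrite bfGZ. Qed.

Lemma bf_trT n (G : 'M[T]_n) u v : bf G^T u v = bf G v u.
Proof. by rewrite bf_tr trmxK. Qed.

Lemma FI_sm rho (M : 'I_Ns -> 'M[T]_d) x t :
  FI p rho M x t = \sum_a second_moment p rho M (x *m x^T) t a a.
Proof.
rewrite /FI /Fb /second_moment.
under [RHS]eq_bigr do rewrite summxE.
rewrite exchange_big /=; apply: eq_bigr => w _.
rewrite bf1 /nsq mulr_sumr; apply: eq_bigr => a _.
rewrite [RHS]mxE; congr (_ * _).
have e : path_trans M w *m (x *m x^T) *m (path_trans M w)^T =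
  (path_trans M w *m x) *m (path_trans M w *m x)^T by rewrite trmx_mul !mulmxA.
by rewrite e [RHS]mxE big_ord1 !mxE expr2.
Qed.

Lemma psd_xx (x : 'cV[T]_d) : psd (x *m x^T).
Proof.
split; first by rewrite /symm trmx_mul trmxK.
move=> v; rewrite !mulmxA -mulmxA mxE big_ord1.
rewrite (_ : v^T *m x = (x^T *m v)^T); last by rewrite trmx_mul trmxK.
rewrite mxE -expr2; exact: sqr_ge0.
Qed.

Lemma S1 x : FI p pi MK x @ \oo --> 0.
Proof.
rewrite (_ : FI p pi MK x = fun t => \sum_a second_moment p pi MK (x *m x^T) t a a).
  by apply: cvg_sum0 => a; apply: HK; apply: psd_xx.
by apply: funext => t; rewrite FI_sm.
Qed.


Definition rhoi (i : 'I_Ns) := fun j : 'I_Ns => if j == i then pi i else 0.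

Lemma rhoi_ge0 i j : 0 <= rhoi i j.
Proof. by rewrite /rhoi; case: eqP. Qed.

Lemma rhoi_le i j : rhoi i j <= pi j.
Proof. by rewrite /rhoi; case: eqP => [->|]. Qed.

Lemma FI_ge0 rho (M : 'I_Ns -> 'M[T]_d) x t : (forall j, 0 <= rho j) -> 0 <= FI p rho M x t.
Proof. by move=> h; apply: Fb_ge0 => // j u; rewrite bf1 nsq_ge0. Qed.

Lemma S2 i x : FI p (rhoi i) MK x @ \oo --> 0.
Proof.
apply: squeeze0 (S1 x) => t; apply/andP; split; first by apply: FI_ge0 => j; apply: rhoi_ge0.
apply: Fb_rho_le => //; [exact: rhoi_ge0 | exact: rhoi_le | by move=> j u; rewrite bf1 nsq_ge0].
Qed.

Lemma Fb0_rhoi i (M G : 'I_Ns -> 'M[T]_d) x y :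
  Fb p (rhoi i) M G x y 0 = pi i * bf (G i) x y.
Proof.
rewrite Fb0 (bigD1 i) //= big1 ?addr0 /rhoi ?eqxx // => j /negPf ->.
by rewrite mul0r.
Qed.

Lemma bf_HP i u v : bf (P i) u v = bf (Q i) u v + bf (Rc i) (K i *m u) (K i *m v)
  + bf (Eop p P i) (MK i *m u) (MK i *m v).
Proof. by rewrite HP !bfGD -!bf_mul. Qed.

Lemma cvg_lin (c : T) (u v : nat -> T) : u @ \oo --> 0 -> v @ \oo --> 0 ->
  (fun t => c * (u t + v t)) @ \oo --> 0.
Proof.
move=> hu hv.
have h : (fun t => u t + v t) @ \oo --> 0.
  rewrite -(addr0 (0:T)). apply: cvgD hu hv.
rewrite -(mulr0 c). apply: cvgMr h.
Qed.

Lemma P_sym i : (P i)^T = P i.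
Proof.
pose N := fun j => P j - (P j)^T.
have hN : forall j, N j = (MK j)^T *m Eop p N j *m MK j.
  move=> j; apply: bf_ext => u v; rewrite -bf_mul bf_Eop /N bfGB bf_trT.
  rewrite (eq_bigr (fun l => p j l * bf (P l) (MK j *m u) (MK j *m v)
     - p j l * bf (P l) (MK j *m v) (MK j *m u))); last first.
    by move=> l _; rewrite bfGB bf_trT mulrBr.
  rewrite sumrB !bf_HP !bf_Eop (bf_sym _ _ (HQ j).1) (bf_sym _ _ (HR j).1).
  ring.
have hconst : forall x y t, Fb p (rhoi i) MK N x y t = Fb p (rhoi i) MK N x y 0.
  move=> x y; elim=> // t IH; rewrite -IH; exact: Fb_step.
have h0 : forall x y, bf (N i) x y = 0.
  move=> x y.
  have hb : `|Fb p (rhoi i) MK N x y 0| <= 0.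
    apply: (le0_of_cvg (v := fun t => (\sum_j cst (N j)) *
       (FI p (rhoi i) MK x t + FI p (rhoi i) MK y t))).
      by move=> t; rewrite -(hconst x y t); apply: Fb_abs => //; apply: rhoi_ge0.
    exact: cvg_lin (S2 i x) (S2 i y).
  have : Fb p (rhoi i) MK N x y 0 = 0 by apply/normr0_eq0/le_anti; rewrite hb normr_ge0.
  rewrite Fb0_rhoi => /eqP; rewrite mulf_eq0 => /orP[|/eqP //].
  by case: Hpi => h _ /eqP hi; have := h i; rewrite hi ltxx.
have : N i = 0 by apply: bf_ext => u v; rewrite h0 /bf mulmx0 mul0mx mxE.
by move/eqP; rewrite /N subr_eq0 => /eqP.
Qed.


Lemma P_psd i u : 0 <= bf (P i) u u.
Proof.
pose H := fun j => (MK j)^T *m Eop p P j *m MK j.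
have hdec : forall t, Fb p (rhoi i) MK P u u t.+1 <= Fb p (rhoi i) MK P u u t.
  move=> t; rewrite (@Fb_step _ _ _ _ _ _ P H) //; apply: Fb_le => //.
    exact: rhoi_ge0.
  move=> j w; rewrite /H -bf_mul [X in _ <= X]bf_HP.
  have := posdef_psd (HQ j) w; have := posdef_psd (HR j) (K j *m w); lra.
have hle : forall t, Fb p (rhoi i) MK P u u t <= Fb p (rhoi i) MK P u u 0.
  elim=> // t IH; exact: le_trans (hdec t) IH.
have : - Fb p (rhoi i) MK P u u 0 <= 0.
  apply: (le0_of_cvg (v := fun t => (\sum_j cst (P j)) *
       (FI p (rhoi i) MK u t + FI p (rhoi i) MK u t))); last exact: cvg_lin (S2 i u) (S2 i u).
  move=> t; have h1 := hle t.
  have h2 : `|Fb p (rhoi i) MK P u u t| <= (\sum_j cst (P j)) *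
       (FI p (rhoi i) MK u t + FI p (rhoi i) MK u t).
    by apply: Fb_abs => //; apply: rhoi_ge0.
  have h3 := ler_norm (- Fb p (rhoi i) MK P u u t); rewrite normrN in h3.
  lra.
rewrite Fb0_rhoi oppr_le0 pmulr_rge0 //.
by case: Hpi.
Qed.

Variable eta : T.
Hypotheses (Heta0 : 0 < eta)
  (Heta1 : eta <= 1 / (2 * max_norm (fun i => Rc i + (B i)^T *m Eop p P i *m B i))).

Definition Kp := fun i => K i - (2 * eta) *: LK p A B Rc K P i.
Local Notation Wm := (fun i => Rc i + (B i)^T *m Eop p P i *m B i).
Local Notation mx := (max_norm Wm).

Lemma spec_le_mx i : spec_norm (Wm i) <= mx.
Proof. exact: (le_bigmax 0 (fun i => spec_norm (Wm i)) i). Qed.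

Lemma mx_pos : 0 < mx.
Proof.
have h0 : 0 <= mx by exact: bigmax_ge_id.
rewrite lt_def h0 andbT; apply/eqP => h; move: Heta1; rewrite h mulr0 invr0 mulr0.
by move=> h'; have := lt_le_trans Heta0 h'; rewrite ltxx.
Qed.

Lemma eta_mx : 2 * eta * mx <= 1.
Proof.
have hm := mx_pos.
have h2 : 0 < 2 * mx by rewrite mulr_gt0.
have := ler_wpM2r (ltW h2) Heta1.
rewrite mul1r mulVf ?gt_eqF // => h.
by rewrite (_ : 2 * eta * mx = eta * (2 * mx)) //; ring.
Qed.

Lemma entryB m n (X Y : 'M[T]_(m, n)) a b : (X - Y) a b = X a b - Y a b.
Proof. by rewrite !mxE. Qed.

Lemma E_sym i x y : bf (Eop p P i) x y = bf (Eop p P i) y x.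
Proof. by rewrite !bf_Eop; apply: eq_bigr => j _; rewrite bf_sym // P_sym. Qed.

Lemma key i u : bf (Q i) u u + bf ((Acl A B Kp i)^T *m Eop p P i *m Acl A B Kp i) u u
  <= bf (P i) u u.
Proof.
set E := Eop p P i; set L := LK p A B Rc K P i.
set z := L *m u; set a := K i *m u; set m := MK i *m u; set c := 2 * eta.
have hK' : Kp i *m u = a - c *: z by rewrite /Kp mulmxBl -scalemxAl.
have hm : m = A i *m u - B i *m a by rewrite /m /Acl mulmxBl mulmxA.
have hM' : Acl A B Kp i *m u = m + c *: (B i *m z).
  rewrite hm /Acl mulmxBl -mulmxA hK' mulmxBr -scalemxAr.
  by rewrite opprB addrA addrAC.
have h3v : Rc i *m a - (B i)^T *m (E *m m) = z.
  rewrite hm /z /L /LK !mulmxBr !mulmxBl !mulmxDl -!mulmxA.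
  by rewrite opprB addrA.
have h3 : bf E (B i *m z) m = bf (Rc i) z a - nsq z.
  have e1 : bf (Rc i) z a = (z^T *m (Rc i *m a)) 0 0 by rewrite /bf mulmxA.
  have e2 : bf E (B i *m z) m = (z^T *m ((B i)^T *m (E *m m))) 0 0.
    by rewrite /bf trmx_mul !mulmxA.
  have e3 : nsq z = (z^T *m (Rc i *m a - (B i)^T *m (E *m m))) 0 0.
    by rewrite h3v -bf1 /bf mulmx1.
  rewrite e1 e2 e3 mulmxBr entryB; ring.
have h4 := posdef_psd (HR i) (a - c *: z).
rewrite bfDl !bfDr !bfNl !bfNr !bfZl !bfZr (bf_sym a z (HR i).1) in h4.
have h5 : bf (Wm i) z z = bf (Rc i) z z + bf E (B i *m z) (B i *m z).
  by rewrite bfGD -bf_mul.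
have h6 : bf (Wm i) z z <= mx * nsq z := bf_le_spec z mx_pos (spec_le_mx i).
have h7 := eta_mx; have hm0 := mx_pos; have hz := nsq_ge0 z.
have hc : 0 < c by rewrite /c mulr_gt0.
rewrite -bf_mul hM' (bf_HP i u u) -/E -/m -/a.
rewrite bfDl !bfDr !bfZl !bfZr (E_sym i m) h3.
have h8 : c ^+ 2 * (bf (Rc i) z z + bf E (B i *m z) (B i *m z)) <= c ^+ 2 * (mx * nsq z).
  by rewrite -h5; apply: ler_wpM2l => //; rewrite exprn_ge0 // ltW.
have h9 : (c * mx) * (c * nsq z) <= 1 * (c * nsq z).
  by apply: ler_wpM2r; [rewrite mulr_ge0 // ltW | rewrite /c].
have h3' : bf E m (B i *m z) = bf (Rc i) z a - nsq z by rewrite E_sym.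
have hcz : 0 <= c * nsq z by rewrite mulr_ge0 // ltW.
rewrite h3'. nra.
Qed.

Local Notation MP := (Acl A B Kp).

Lemma Fb_scale rho (M G : 'I_Ns -> 'M[T]_d) (c : T) x y t :
  Fb p rho M (fun j => c *: G j) x y t = c * Fb p rho M G x y t.
Proof. by rewrite /Fb mulr_sumr; apply: eq_bigr => w _; rewrite bfGZ mulrCA. Qed.

Lemma S6 x : FI p pi MP x @ \oo --> 0.
Proof.
pose H := fun j => (MP j)^T *m Eop p P j *m MP j.
pose V := fun t => Fb p pi MP P x x t.
pose Wq := fun t => Fb p pi MP Q x x t.
have hstep : forall t, V t.+1 + Wq t <= V t.
  move=> t; rewrite /V (@Fb_step _ _ _ _ _ _ P H) // /Wq addrC -Fb_add.
  by apply: Fb_le => // j w; rewrite bfGD; apply: key.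
have hV0 : forall t, 0 <= V t.
  by move=> t; apply: Fb_ge0 => // j w; apply: P_psd.
have hW0 : forall t, 0 <= Wq t.
  by move=> t; apply: Fb_ge0 => // j w; apply: posdef_psd.
have hsum : forall n, \sum_(0 <= t < n) Wq t + V n <= V 0.
  elim=> [|n IH]; first by rewrite big_geq // add0r.
  rewrite big_nat_recr //=; have := hstep n; lra.
have hWq : Wq @ \oo --> 0.
  apply: (series_cvg0 (C := V 0)) => // n; have := hsum n; have := hV0 n; lra.
set cQ := \sum_j pdc (Q j).
apply: (squeeze0 (v := fun t => cQ * Wq t)).
  move=> t; apply/andP; split; first exact: FI_ge0.
  rewrite /Wq -Fb_scale; apply: Fb_le => // j w.
  rewrite bf1 bfGZ; apply: le_trans (posdef_lb (HQ j) w) _.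
  apply: ler_wpM2r; first exact: posdef_psd.
  rewrite /cQ (bigD1 j) //= lerDl; apply: sumr_ge0 => l _; exact: pdc_ge0.
rewrite -(mulr0 cQ); exact: cvgMr hWq.
Qed.

Lemma Kp_stab : ms_stabilizing p pi A B Kp.
Proof.
move=> X0 _ a b.
pose e := fun l : 'I_d => (delta_mx l 0 : 'cV[T]_d).
apply: (squeeze_abs (v := fun t => (cst X0 * 2) * \sum_l FI p pi MP (e l) t)); last first.
  have hs : (fun t => \sum_l FI p pi MP (e l) t) @ \oo --> 0 by apply: cvg_sum0 => l; exact: S6.
  rewrite -[X in _ --> X](mulr0 (cst X0 * 2)); exact: cvgMr hs.
move=> t; rewrite /second_moment summxE.
apply: le_trans (ler_norm_sum _ _ _) _.
rewrite /FI /Fb exchange_big mulr_sumr; apply: ler_sum => w _ /=.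
have hpw : 0 <= path_prob p pi w by apply: path_prob_ge0.
rewrite mxE normrM ger0_norm // -mulr_sumr mulrCA; apply: ler_wpM2l => //.
set Phi := path_trans MP w.
have e0 : (Phi *m X0 *m Phi^T) a b = bf X0 (Phi^T *m e a) (Phi^T *m e b).
  by rewrite -(bf_delta (Phi *m X0 *m Phi^T) a b) bf_mul trmxK.
rewrite e0; apply: le_trans (bf_abs _ _ _) _; rewrite -mulrA; apply: ler_wpM2l.
  exact: cst_ge0.
have hn : forall c, nsq (Phi^T *m e c) <= \sum_l bf 1%:M (Phi *m e l) (Phi *m e l).
  move=> c; rewrite /nsq; apply: ler_sum => l _; rewrite bf1.
  have -> : (Phi^T *m e c) l 0 = (Phi *m e l) c 0 by rewrite /e -!colE !mxE.
  exact: sq_le_nsq.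
have := hn a; have := hn b; lra.
Qed.

End Main.

Theorem lemma8 (T : realType) (Ns d k : nat) (HNs : (0 < Ns)%N)
  (A : 'I_Ns -> 'M[T]_d) (B : 'I_Ns -> 'M[T]_(d, k))
  (p : 'I_Ns -> 'I_Ns -> T) (pi : 'I_Ns -> T)
  (Q : 'I_Ns -> 'M[T]_d) (Rc : 'I_Ns -> 'M[T]_k)
  (Hp : stochastic p) (Hpi : init_distr pi)
  (Hstabilizable : exists K0, ms_stabilizing p pi A B K0)
  (HQ : forall i, posdef (Q i)) (HR : forall i, posdef (Rc i))
  (K : 'I_Ns -> 'M[T]_(k, d)) (HK : ms_stabilizing p pi A B K)
  (P : 'I_Ns -> 'M[T]_d) (HP : is_PK p A B Q Rc K P)
  (eta : T) (Heta0 : 0 < eta)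
  (Heta1 : eta <= 1 / (2 * max_norm (fun i => Rc i + (B i)^T *m Eop p P i *m B i))) :
  ms_stabilizing p pi A B (fun i => K i - (2 * eta) *: LK p A B Rc K P i).
Proof.
exact: (Kp_stab Hp Hpi HQ HR HK HP Heta0 Heta1).
Qed.
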